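(* Let $n,d,k,V$ be positive integers, where $n$ is the maximum sentence length, videos live in $\mathbb{R}^d$, and $V$ is the vocabulary size. Let $\mathcal{U}=\{u_1,\dots,u_V\}$ with each word embedding $u_i\in\mathbb{R}^k$, and let $\delta_{\min}=\min_{i,j\in[V],\,i\neq j}\|u_i-u_j\|_2$. Let $f:\mathbb{R}^{nk}\to\mathbb{R}^d$ be any map (the text-to-video generation model), viewed as a map from the discrete sentence space $\{u_1,\dots,u_V\}^n\subset\mathbb{R}^{nk}$ to $\mathbb{R}^d$. Let $M:=\max_x\|f(x)\|_2$ and $m:=\min_x\|f(x)\|_2$, where $x$ ranges over $\{u_1,\dots,u_V\}^n$, and let $\epsilon=\big((M^d-m^d)/V^n\big)^{1/d}$. Then there exists $y\in\mathbb{R}^d$ with $m\le\|y\|_2\le M$ such that for every sentence $x\in\{u_1,\dots,u_V\}^n$, $\|f(x)-y\|_2\ge\epsilon$.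
   Context: A sentence $x\in\{u_1,\dots,u_V\}^n$ is identified with the concatenation of its $n$ word embeddings, a vector in $\mathbb{R}^{nk}$. $[V]=\{1,\dots,V\}$. *)

(* Defs.v *)
From HB Require Import structures.
From mathcomp Require Import all_boot all_order all_algebra.
From mathcomp Require Import all_classical all_reals all_analysis.
Set Implicit Arguments. Unset Strict Implicit. Unset Printing Implicit Defensive.
Import Order.TTheory GRing.Theory Num.Theory.
Local Open Scope ring_scope.

Definition l2norm (R : realType) (d : nat) (v : 'rV[R]_d) : R :=
  Num.sqrt (\sum_(i < d) v ord0 i ^+ 2).

Definition sentence (n V : nat) := {ffun 'I_n -> 'I_V}.

(* The sentence as a vector in R^{nk}: concatenation of its n word
   embeddings (row-major vectorisation of the n x k matrix of embeddings). *)
Definition embed_sentence (R : realType) (n k V : nat)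
  (u : 'I_V -> 'rV[R]_k) (s : sentence n V) : 'rV[R]_(n * k) :=
  mxvec (\matrix_(i < n, j < k) u (s i) ord0 j).

(* minimum pairwise distance of the embeddings (delta_min in the paper;
   not used in the conclusion) *)
Definition delta_min (R : realType) (k V : nat) (u : 'I_V -> 'rV[R]_k) : R :=
  let top := \big[Order.max/0]_(i < V) \big[Order.max/0]_(j < V) l2norm (u i - u j) in
  \big[Order.min/top]_(i < V) \big[Order.min/top]_(j < V | j != i) l2norm (u i - u j).

(* M = max over sentences of ||f(x)||  (norms are >= 0, so 0 is a neutral start) *)
Definition Mmax (R : realType) (n k d V : nat)
  (u : 'I_V -> 'rV[R]_k) (f : 'rV[R]_(n * k) -> 'rV[R]_d) : R :=
  \big[Order.max/0]_(s : sentence n V) l2norm (f (embed_sentence u s)).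

(* m = min over sentences of ||f(x)||  (started at M, which is >= every term) *)
Definition mmin (R : realType) (n k d V : nat)
  (u : 'I_V -> 'rV[R]_k) (f : 'rV[R]_(n * k) -> 'rV[R]_d) : R :=
  \big[Order.min/Mmax u f]_(s : sentence n V) l2norm (f (embed_sentence u s)).

(* Main.v *)
Require Import Defs.
From HB Require Import structures.
From mathcomp Require Import all_boot all_order all_algebra.
From mathcomp Require Import all_classical all_reals all_analysis.
From mathcomp Require Import finmap.
From mathcomp Require Import ring lra zify.
Import Order.TTheory GRing.Theory Num.Theory.
Import numFieldTopology.Exports.
Local Open Scope ring_scope.

Lemma nat_close_aux (x y t : nat) : ((y < x)%N -> (x - y <= t)%N) -> (x <= y + t)%N.
Proof. move=> h; case: (leqP x y) => hxy; [lia | have := h hxy; lia]. Qed.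

Lemma nat_close (R : realType) (x y : nat) (L : R) : 0 <= L ->
  `|x%:R - y%:R| <= L -> (x <= y + Num.truncn L)%N.
Proof.
move=> L0 h; apply: (@nat_close_aux x y (Num.truncn L)) => hxy.
rewrite truncn_ge_nat // natrB; last exact: ltnW.
exact: le_trans (ler_norm _) h.
Qed.

Lemma iota_nat_aux (t t0 L : nat) : (t <= t0 + L)%N -> (t0 <= t + L)%N ->
  (t0 - L <= t < t0 - L + (2 * L + 1))%N.
Proof. move=> h1 h2; apply/andP; split; lia. Qed.

Lemma card_close (R : realType) (K : nat) (T : pred 'I_K) (L : R) : 0 <= L ->
  (forall t t', t \in T -> t' \in T -> `|(t : nat)%:R - (t' : nat)%:R| <= L) ->
  (#|T| <= 2 * Num.truncn L + 1)%N.
Proof.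
move=> L0 h; case: (posnP #|T|) => [->//|/card_gt0P [t0 t0T]].
rewrite cardE -(size_map val).
have -> : (2 * Num.truncn L + 1 = size (iota (t0 - Num.truncn L) (2 * Num.truncn L + 1)))%N.
  by rewrite size_iota.
apply: uniq_leq_size; first by rewrite map_inj_uniq ?enum_uniq //; exact: val_inj.
move=> x /mapP [t]; rewrite mem_enum => tT ->; rewrite mem_iota.
have h1 := @nat_close R _ _ L L0 (h _ _ tT t0T).
have h2 := @nat_close R _ _ L L0 (h _ _ t0T tT).
exact: iota_nat_aux h1 h2.
Qed.

Lemma pos_sum_has (T : eqType) (s : seq T) (P : pred T) :
  (exists2 x, x \in s & P x) -> (0 < \sum_(x <- s) (P x : nat))%N.
Proof.
elim: s => [[x]//|a s IH [x]]; rewrite inE big_cons => /orP[/eqP ->|xs] Px.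
  by rewrite Px.
by rewrite addn_gt0 IH ?orbT //; exists x.
Qed.

Lemma foldr_bound (l : seq nat) (B : nat) : all (fun x => x <= B)%N l ->
  (foldr muln 1 l <= B ^ size l)%N.
Proof.
elim: l => //= a l IH /andP[ha hl]; rewrite expnS; apply: leq_mul => //; exact: IH.
Qed.

Lemma sum_ind_card (T : finType) (A : pred T) : (\sum_(k : T) (k \in A : nat) = #|A|)%N.
Proof. rewrite -sum1_card [RHS]big_mkcond; apply: eq_bigr => k _; by case: (k \in A). Qed.

Section Norm.
Variables (R : realType) (d : nat).
Implicit Types (v w : 'rV[R]_d).

Lemma nrm_ge0 v : 0 <= l2norm v.
Proof. exact: sqrtr_ge0. Qed.

Lemma nrm_scale (a : R) v : l2norm (a *: v) = `|a| * l2norm v.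
Proof.
rewrite /l2norm.
rewrite (eq_bigr (fun i => a ^+ 2 * v ord0 i ^+ 2)); last first.
  by move=> i _; rewrite mxE exprMn.
by rewrite -mulr_sumr sqrtrM ?sqr_ge0 // sqrtr_sqr.
Qed.

Lemma nrm_coord v j : `|v ord0 j| <= l2norm v.
Proof.
rewrite /l2norm -sqrtr_sqr ler_sqrt; last by apply: sumr_ge0 => i _; exact: sqr_ge0.
rewrite (bigD1 j) //= lerDl; apply: sumr_ge0 => i _; exact: sqr_ge0.
Qed.

Lemma nrm_le0 v : l2norm v <= 0 -> v = 0.
Proof.
move=> h.
have h0 : l2norm v = 0 by apply/eqP; rewrite eq_le h nrm_ge0.
move: h0; rewrite /l2norm => /eqP; rewrite sqrtr_eq0 => hs.
have hs0 : \sum_(i < d) v ord0 i ^+ 2 = 0.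
  by apply/eqP; rewrite eq_le hs; apply: sumr_ge0 => i _; exact: sqr_ge0.
apply/matrixP => i j; rewrite (ord1 i) mxE.
have := (@psumr_eq0P R _ xpredT _ (fun i _ => sqr_ge0 (v ord0 i)) hs0 j isT).
by move/eqP; rewrite sqrf_eq0 => /eqP.
Qed.

Lemma nrm_small v : (0 < d)%N -> (forall j, `|v ord0 j| <= d%:R^-1) -> l2norm v <= 1.
Proof.
move=> hd h; rewrite /l2norm -sqrtr1 ler_sqrt ?ler01 //.
have dpos : 0 < d%:R :> R by rewrite ltr0n.
apply: le_trans (_ : \sum_(i < d) (d%:R^-1) ^+ 2 <= 1).
  apply: ler_sum => i _; rewrite -real_normK ?num_real //.
  by apply: lerXn2r; rewrite ?nnegrE ?normr_ge0 ?invr_ge0 ?ler0n.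
rewrite sumr_const card_ord.
have -> : (d%:R^-1 ^+ 2 *+ d = d%:R^-1 :> R) by rewrite -mulr_natr; field; rewrite gt_eqF.
by rewrite invf_le1 // ler1n.
Qed.


Definition cball (p : 'rV[R]_d) (r : R) : set 'rV[R]_d := fun y => l2norm (y - p) <= r.
Definition covers (s : seq ('rV[R]_d * R)) (S : set 'rV[R]_d) :=
  forall y, S y -> exists2 qr, qr \in s & l2norm (y - qr.1) <= qr.2.
Definition wt (s : seq ('rV[R]_d * R)) := \sum_(qr <- s) `|qr.2| ^+ d.
Definition Wset : set R := fun x => exists s, covers s (cball 0 1) /\ x = wt s.
Definition cst := inf Wset.

Lemma wt_ge0 s : 0 <= wt s.
Proof. by apply: sumr_ge0 => i _; exact: exprn_ge0. Qed.

Lemma Wset_inf : has_inf Wset.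
Proof.
split; last by exists 0 => x [s [_ ->]]; exact: wt_ge0.
exists (wt [:: (0, 1)]), [:: (0,1)]; split => //.
by move=> y hy; exists (0, 1); rewrite ?mem_seq1.
Qed.

Lemma cst_le s : covers s (cball 0 1) -> cst <= wt s.
Proof.
move=> hs; have [_ hl] := Wset_inf.
by apply: (ge_inf hl); exists s.
Qed.

Hypothesis hd : (0 < d)%N.
Lemma cover_lb p Rr s : 0 <= Rr -> covers s (cball p Rr) -> cst * Rr ^+ d <= wt s.
Proof.
rewrite le_eqVlt => /orP[/eqP <-|Rpos] hs.
  by rewrite expr0n gtn_eqF // mulr0 wt_ge0.
pose s' := map (fun qr : 'rV[R]_d * R => (Rr^-1 *: (qr.1 - p), qr.2 / Rr)) s.
have Rn0 : Rr != 0 by rewrite gt_eqF.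
have hs' : covers s' (cball 0 1).
  move=> z; rewrite /cball subr0 => hz.
  have [qr qin hq] : exists2 qr, qr \in s & l2norm (p + Rr *: z - qr.1) <= qr.2.
    apply: hs; rewrite /cball addrC addKr nrm_scale ger0_norm ?(ltW Rpos) //.
    by rewrite -[X in _ <= X]mulr1 ler_wpM2l // ltW.
  exists (Rr^-1 *: (qr.1 - p), qr.2 / Rr); first by apply/mapP; exists qr.
  have -> : z - (Rr^-1 *: (qr.1 - p), qr.2 / Rr).1 = Rr^-1 *: (p + Rr *: z - qr.1).
    rewrite /= scalerBr !scalerDr scalerN scalerA mulVf // scale1r.
    by rewrite opprB [_ + z]addrC addrA.
  rewrite nrm_scale /= ger0_norm ?invr_ge0 ?(ltW Rpos) // mulrC.
  by rewrite ler_wpM2r // invr_ge0 ltW.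
have := cst_le _ hs'.
have -> : wt s' = wt s / Rr ^+ d.
  rewrite /wt big_map mulr_suml; apply: eq_bigr => qr _ /=.
  by rewrite normrM exprMn normfV (ger0_norm (ltW Rpos)) exprVn.
by rewrite ler_pdivlMr // exprn_gt0.
Qed.

Lemma nrm0 : l2norm (0 : 'rV[R]_d) = 0.
Proof. by rewrite -(scale0r (0 : 'rV[R]_d)) nrm_scale normr0 mul0r. Qed.

Lemma cover_ub p Rr e : 0 <= Rr -> 0 < e ->
  exists s, covers s (cball p Rr) /\ wt s <= (cst + e) * Rr ^+ d.
Proof.
move=> R0 e0.
have [x [s0 [hs0 ->]] hx] := inf_adherent e0 Wset_inf.
exists (map (fun qr : 'rV[R]_d * R => (p + Rr *: qr.1, Rr * qr.2)) s0); split.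
  move=> y hy.
  have [z hz hyz] : exists2 z, cball 0 1 z & y - p = Rr *: z.
    move: R0; rewrite le_eqVlt => /orP[/eqP R0|Rpos].
      exists 0; first by rewrite /cball subr0 nrm0 ler01.
      rewrite -R0 scale0r; apply: nrm_le0; by rewrite -R0 in hy.
    exists (Rr^-1 *: (y - p)); last by rewrite scalerA mulfV ?gt_eqF // scale1r.
    have Ri : 0 <= Rr^-1 by rewrite invr_ge0 ltW.
    rewrite /cball subr0 nrm_scale (ger0_norm Ri).
    have Rn0 : Rr != 0 by rewrite gt_eqF.
    by rewrite mulrC ler_pdivrMr // mul1r.
  have [qr qin hq] := hs0 z hz.
  exists (p + Rr *: qr.1, Rr * qr.2); first by apply/mapP; exists qr.
  have -> : y - (p + Rr *: qr.1, Rr * qr.2).1 = Rr *: (z - qr.1).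
    by rewrite /= scalerBr -hyz opprD addrA.
  by rewrite nrm_scale ger0_norm //= ler_wpM2l.
rewrite /wt big_map (eq_bigr (fun qr => Rr ^+ d * `|qr.2| ^+ d)); last first.
  by move=> qr _ /=; rewrite normrM exprMn (ger0_norm R0).
by rewrite -mulr_sumr mulrC ler_wpM2r ?exprn_ge0 // ltW.
Qed.

Lemma count_cover (s : seq ('rV[R]_d * R)) (K : nat) : (0 < K)%N ->
  covers s (cball 0 1) ->
  (K%:R) ^+ d <= \sum_(qr <- s) (4 * d%:R * `|qr.2| * K%:R + 1) ^+ d.
Proof.
move=> K0 hs.
have dpos : 0 < d%:R :> R by rewrite ltr0n.
have Kpos : 0 < K%:R :> R by rewrite ltr0n.
pose a : R := d%:R^-1.
pose g (k : {ffun 'I_d -> 'I_K}) : 'rV[R]_d := \row_j (a * (k j : nat)%:R / K%:R).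
pose T (qr : 'rV[R]_d * R) (j : 'I_d) : pred 'I_K :=
  fun t => `|a * (t : nat)%:R / K%:R - qr.1 ord0 j| <= `|qr.2|.
pose L (qr : 'rV[R]_d * R) : R := 2 * `|qr.2| * K%:R * d%:R.
have L0 qr : 0 <= L qr by rewrite /L !mulr_ge0 ?ler0n.
have step1 : (K ^ d <= \sum_(qr <- s) #|family (T qr)|)%N.
  have -> : (K ^ d = \sum_(k : {ffun 'I_d -> 'I_K}) 1)%N.
    by rewrite sum1_card card_ffun !card_ord.
  apply: leq_trans (_ : (\sum_(k : {ffun 'I_d -> 'I_K}) \sum_(qr <- s) (k \in family (T qr) : nat) <= _)%N).
    apply: leq_sum => k _; apply: pos_sum_has.
    have gin : cball 0 1 (g k).
      rewrite /cball subr0; apply: nrm_small => // j; rewrite mxE.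
      rewrite ger0_norm; last by rewrite !mulr_ge0 ?invr_ge0 ?ler0n.
      rewrite -mulrA ler_piMr ?invr_ge0 ?ler0n // ler_pdivrMr // mul1r ler_nat.
      exact: ltnW.
    have [qr qin hq] := hs _ gin.
    exists qr => //; apply/familyP => j; rewrite /T unfold_in /=.
    apply: le_trans (ler_norm _).
    apply: le_trans hq; have := nrm_coord (g k - qr.1) j; by rewrite !mxE.
  rewrite exchange_big /=; apply: leq_sum => qr _.
  by rewrite sum_ind_card.
have step2 qr : (#|family (T qr)| <= (2 * Num.truncn (L qr) + 1) ^ d)%N.
  rewrite card_family.
  have := @foldr_bound [seq #|T qr x| | x : 'I_d] (2 * Num.truncn (L qr) + 1).
  rewrite size_map size_enum_ord; apply; apply/allP => x /mapP [j _ ->].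
  apply: card_close => // t t' tT t'T.
  move: tT t'T; rewrite /T !unfold_in /= => ht ht'.
  have -> : (t : nat)%:R - (t' : nat)%:R =
      ((a * (t : nat)%:R / K%:R - qr.1 ord0 j) - (a * (t' : nat)%:R / K%:R - qr.1 ord0 j)) * K%:R * d%:R.
    rewrite /a; field; rewrite !gt_eqF //.
  rewrite /L !normrM !(ger0_norm (ltW Kpos)) !(ger0_norm (ltW dpos)).
  rewrite ler_pM2r // ler_pM2r // mulr2n mulrDl mul1r.
  by apply: le_trans (ler_normB _ _) _; apply: lerD.
have h : (K ^ d <= \sum_(qr <- s) (2 * Num.truncn (L qr) + 1) ^ d)%N.
  by apply: leq_trans step1 _; apply: leq_sum => qr _; exact: step2.
rewrite -(ler_nat R) natrX natr_sum in h; apply: le_trans h _.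
apply: ler_sum => qr _; rewrite natrX.
apply: lerXn2r; rewrite ?nnegrE ?ler0n //.
rewrite natrD natrM lerD2r.
have := truncn_le (L qr); rewrite L0 => hL.
apply: le_trans (ler_wpM2l _ hL) _ => //.
by rewrite /L; lra.
Qed.

Lemma pow_lin (x t : R) (n : nat) : 0 <= x -> 0 <= t -> t <= 1 ->
  (x + t) ^+ n <= x ^+ n + t * (x + 2) ^+ n.
Proof.
move=> x0 t0 t1; elim: n => [|n IH]; first by rewrite !expr0; lra.
have X0 : 0 <= x ^+ n by exact: exprn_ge0.
have C0 : 0 <= (x + 2) ^+ n by apply: exprn_ge0; lra.
have XC : x ^+ n <= (x + 2) ^+ n by apply: lerXn2r; rewrite ?nnegrE //; lra.
rewrite !exprS; apply: le_trans (ler_wpM2l _ IH) _; first lra.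
move: X0 C0 XC; set X := x ^+ n; set C := (x + 2) ^+ n => X0 C0 XC.
have h1 : 0 <= t * (C - X) by apply: mulr_ge0; lra.
have h2 : 0 <= t * (1 - t) * C by apply: mulr_ge0 => //; apply: mulr_ge0; lra.
nra.
Qed.

Lemma sum_limit (b : seq R) : all (fun x => 0 <= x) b ->
  (forall K : nat, (0 < K)%N -> K%:R ^+ d <= \sum_(x <- b) (x * K%:R + 1) ^+ d) ->
  1 <= \sum_(x <- b) x ^+ d.
Proof.
move=> b0 h.
set Y := \sum_(x <- b) x ^+ d; set C := \sum_(x <- b) (x + 2) ^+ d.
have C0 : 0 <= C.
  rewrite /C big_seq; apply: sumr_ge0 => x xb; apply: exprn_ge0.
  have := allP b0 x xb; rewrite /=; lra.
have key K : (0 < K)%N -> 1 <= Y + K%:R^-1 * C.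
  move=> K0; have Kp : 0 < K%:R :> R by rewrite ltr0n.
  have := h K K0.
  have Ki : 0 < K%:R^-1 :> R by rewrite invr_gt0.
  rewrite -(ler_pM2r (exprn_gt0 d Ki)) -exprMn mulfV ?gt_eqF // expr1n.
  rewrite mulr_suml => h1; apply: le_trans h1 _.
  rewrite /Y /C mulr_sumr -big_split /=; rewrite big_seq [X in _ <= X]big_seq; apply: ler_sum => x xb.
  rewrite -exprMn mulrDl -mulrA mulfV ?gt_eqF // mulr1 mul1r.
  apply: pow_lin; first exact: (allP b0 x xb).
    by rewrite invr_ge0 ltW.
  by rewrite invf_le1 // ler1n.
rewrite leNgt; apply/negP => Y1.
have Yp : 0 < 1 - Y by lra.
pose K := (Num.bound (C / (1 - Y))).+1.
have hK : C / (1 - Y) < K%:R.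
  apply: lt_le_trans (archi_boundP _) _; first by apply: divr_ge0; lra.
  by rewrite ler_nat.
have := key K isT.
have Kp : 0 < K%:R :> R by rewrite ltr0n.
move: hK; rewrite ltr_pdivrMr // => hK.
have : K%:R^-1 * C < 1 - Y.
  by rewrite ltr_pdivrMl // mulrC.
lra.
Qed.

Lemma wt_lb s : covers s (cball 0 1) -> ((4 * d%:R) ^+ d)^-1 <= wt s.
Proof.
move=> hs.
have h := @sum_limit [seq 4 * d%:R * `|qr.2| | qr <- s].
rewrite big_map in h.
have {h} h : 1 <= \sum_(qr <- s) (4 * d%:R * `|qr.2|) ^+ d.
  apply: h.
    by apply/allP => x /mapP [qr _ ->]; rewrite !mulr_ge0 ?ler0n.
  by move=> K K0; rewrite big_map; exact: count_cover.
have P : 0 < (4 * d%:R) ^+ d :> R by apply: exprn_gt0; rewrite mulr_gt0 ?ltr0n.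
rewrite -[_^-1]mul1r ler_pdivrMr // mulrC.
move: h; rewrite /wt mulr_sumr.
by under eq_bigr do rewrite exprMn.
Qed.

Lemma cst_pos : 0 < cst.
Proof.
have P : 0 < ((4 * d%:R) ^+ d)^-1 :> R.
  by rewrite invr_gt0; apply: exprn_gt0; rewrite mulr_gt0 ?ltr0n.
apply: lt_le_trans P _; apply: lb_le_inf; first by case: Wset_inf.
by move=> x [s [hs ->]]; exact: wt_lb.
Qed.

Lemma nrm_cont : continuous (fun y : 'rV[R]_d => l2norm y).
Proof.
move=> y; rewrite /l2norm.
apply: (@continuous_comp _ _ _ (fun y : 'rV[R]_d => \sum_(i < d) y ord0 i ^+ 2) Num.sqrt); last first.
  exact: sqrt_continuous.
apply: (@continuous_big R 'I_d +%R 0 xpredT add_continuous _ _ (fun i (y : 'rV[R]_d) => y ord0 i ^+ 2)).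
move=> i _ z.
apply: (@continuous_comp _ _ _ (fun y : 'rV[R]_d => y ord0 i) (fun x : R => x ^+ 2)).
  exact: coord_continuous.
exact: exprn_continuous.
Qed.

Lemma nrmB_cont (p : 'rV[R]_d) : continuous (fun y : 'rV[R]_d => l2norm (p - y)).
Proof.
move=> y.
apply: (@continuous_comp _ _ _ (fun y : 'rV[R]_d => p - y) (fun y => l2norm y)); last exact: nrm_cont.
apply: continuousB; first exact: cst_continuous.
by [].
Qed.

Lemma uniform_eps (P : seq 'rV[R]_d) (m M e : R) :
  (forall y, m <= l2norm y <= M -> exists2 p, p \in P & l2norm (p - y) < e) ->
  exists e', e' < e /\ forall y, m <= l2norm y <= M -> exists2 p, p \in P & l2norm (p - y) <= e'.
Proof.
move=> H.
pose A := [set y : 'rV[R]_d | m <= l2norm y <= M]%classic.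
have Acl : closed A.
  have -> : A = ((fun y => l2norm y) @^-1` [set x | m <= x] `&` (fun y => l2norm y) @^-1` [set x | x <= M])%classic.
    by apply/seteqP; split => y /=; [move/andP | move=> [h1 h2]; apply/andP].
  apply: closedI.
    apply: preimage_closed. by move=> x _; exact: nrm_cont. exact: closed_ge.
  apply: preimage_closed. by move=> x _; exact: nrm_cont. exact: closed_le.
have cA : compact A.
  apply: bounded_closed_compact Acl.
  exists M; split; first exact: num_real.
  move=> x Mx y /andP [h1 h2] /=.
  rewrite /Num.norm /= mx_normrE.
  apply: bigmax_le => [|ij _]; first by apply: ltW; apply: le_lt_trans Mx; have := nrm_ge0 y; lra.
  rewrite (ord1 ij.1); apply: ltW; apply: le_lt_trans Mx.
  exact: le_trans (nrm_coord y ij.2) h2.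
move: cA; rewrite compact_cover => cA.
pose D := [set ij : nat * 'rV[R]_d | ij.2 \in P]%classic.
pose f (ij : nat * 'rV[R]_d) := [set y : 'rV[R]_d | l2norm (ij.2 - y) < e - (ij.1.+1%:R)^-1]%classic.
have fop : forall ij, D ij -> open (f ij).
  move=> ij _.
  have -> : f ij = ((fun y => l2norm (ij.2 - y)) @^-1` [set x | x < e - (ij.1.+1%:R)^-1])%classic by [].
  apply: open_comp; first by move=> y _; exact: nrmB_cont.
  exact: open_lt.
have fcov : (A `<=` \bigcup_(ij in D) f ij)%classic.
  move=> y Ay; have [p pP hp] := H y Ay.
  have dp : 0 < e - l2norm (p - y) by lra.
  pose j := Num.bound ((e - l2norm (p - y))^-1).
  have hj : (e - l2norm (p - y))^-1 < j.+1%:R.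
    apply: lt_trans (archi_boundP _) _; first by rewrite invr_ge0 ltW.
    by rewrite ltr_nat.
  exists (j, p) => //; rewrite /f /=.
  have : (j.+1%:R)^-1 < e - l2norm (p - y).
    rewrite -[X in _ < X]invrK ltf_pV2 //; rewrite posrE ?ltr0n ?invr_gt0 //.
  by move=> h; rewrite ltrBrDr addrC -ltrBrDr.
have [D' sD cov] := cA _ D f fop fcov.
pose J := (\sum_(ij <- D') ij.1)%N.
exists (e - (J.+1%:R)^-1); split.
  by rewrite gtrBl invr_gt0 ltr0n.
move=> y Ay; have [ij ijD' hij] := cov y Ay.
have := sD ij ijD'; rewrite in_setE => ijD.
exists ij.2 => //; apply: ltW; apply: lt_le_trans hij _.
rewrite lerD2l lerN2 lef_pV2 ?posrE ?ltr0n // ler_nat ltnS.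
rewrite /J (big_rem ij) //=; exact: leq_addr.
Qed.
Lemma nrmN v : l2norm (- v) = l2norm v.
Proof. by rewrite -scaleN1r nrm_scale normrN normr1 mul1r. Qed.

Lemma sum_const_seq (T : Type) (P : seq T) (c : R) : \sum_(p <- P) c = (size P)%:R * c.
Proof.
elim: P => [|a P IH]; first by rewrite big_nil mul0r.
by rewrite big_cons IH /= -add1n natrD mulrDl mul1r.
Qed.

Lemma core (P : seq 'rV[R]_d) (m M eps : R) : 0 <= m -> m <= M -> 0 < eps ->
  (0 < size P)%N -> (size P)%:R * eps ^+ d = M ^+ d - m ^+ d ->
  exists y, m <= l2norm y <= M /\ forall p, p \in P -> eps <= l2norm (p - y).
Proof.
move=> m0 mM eps0 P0 heps.
case: (pselect (exists y, m <= l2norm y <= M /\ forall p, p \in P -> eps <= l2norm (p - y))) => // hno.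
exfalso.
have H : forall y, m <= l2norm y <= M -> exists2 p, p \in P & l2norm (p - y) < eps.
  move=> y hy; apply: contrapT => hn; apply: hno; exists y; split => // p pP.
  rewrite leNgt; apply/negP => hlt; apply: hn; by exists p.
have [e' [he' cov]] := uniform_eps _ _ _ _ H.
have [e2 [e20 [e2e cov2]]] : exists e2, 0 <= e2 /\ e2 < eps /\
    forall y, m <= l2norm y <= M -> exists2 p, p \in P & l2norm (p - y) <= e2.
  case: (leP 0 e') => he0; first by exists e'.
  exists 0; split => //; split => // y hy; have [p pP hp] := cov y hy.
  by exists p => //; rewrite (le_trans hp) // ltW.
pose X := m ^+ d + (size P)%:R * e2 ^+ d.
have X0 : 0 <= X.
  rewrite /X; apply: addr_ge0; [exact: exprn_ge0 | apply: mulr_ge0; [exact: ler0n | exact: exprn_ge0]].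
have M0 : 0 <= M by apply: le_trans mM.
have key : forall dl, 0 < dl -> cst * M ^+ d <= (cst + dl) * X.
  move=> dl dl0.
  have [sm [hsm wsm]] := cover_ub 0 m dl m0 dl0.
  have hF : forall p : 'rV[R]_d, exists s, covers s (cball p e2) /\ wt s <= (cst + dl) * e2 ^+ d.
    by move=> p; exact: cover_ub p e2 dl e20 dl0.
  have [F hFp] := choice hF.
  pose tot := sm ++ flatten [seq F p | p <- P].
  have htot : covers tot (cball 0 M).
    move=> y; rewrite /cball subr0 => hy.
    case: (ltP (l2norm y) m) => hym.
      have hym' : cball 0 m y by rewrite /cball subr0 ltW.
      have [qr qin hq] := hsm y hym'.
      by exists qr => //; rewrite mem_cat qin.
    have [p pP hp] := cov2 y (introT andP (conj hym hy)).
    have hy' : cball p e2 y by rewrite /cball -nrmN opprB.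
    have [qr qin hq] := (hFp p).1 y hy'.
    exists qr => //; rewrite mem_cat; apply/orP; right; apply/flatten_mapP; by exists p.
  apply: le_trans (cover_lb 0 M tot M0 htot) _.
  rewrite /wt big_cat big_flatten big_map /=.
  apply: le_trans (lerD wsm (ler_sum _ (fun p _ => (hFp p).2))) _.
  by rewrite sum_const_seq /X mulrDr mulrCA.
have key2 : cst * M ^+ d <= cst * X.
  apply/ler_addgt0Pr => e e0.
  have := key (e / (X + 1)) (divr_gt0 e0 (ltr_wpDl X0 ltr01)).
  move/le_trans; apply; rewrite mulrDl lerD2l.
  rewrite mulrAC ler_pdivrMr ?ltr_wpDl // ler_wpM2l ?ltW //; lra.
have XM : X < M ^+ d.
  have h1 : e2 ^+ d < eps ^+ d by rewrite ltrXn2r // gtn_eqF.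
  have Np : 0 < (size P)%:R :> R by rewrite ltr0n.
  have h2 : (size P)%:R * e2 ^+ d < (size P)%:R * eps ^+ d by rewrite ltr_pM2l.
  rewrite /X; lra.
have := cst_pos; move: key2; nra.
Qed.
End Norm.

Theorem theorem5p9 (R : realType) (n d k V : nat)
  (hn : (0 < n)%N) (hd : (0 < d)%N) (hk : (0 < k)%N) (hV : (0 < V)%N)
  (u : 'I_V -> 'rV[R]_k) (f : 'rV[R]_(n * k) -> 'rV[R]_d) :
  let M := Mmax u f in
  let m := mmin u f in
  let eps := ((M ^+ d - m ^+ d) / (V ^ n)%:R) `^ (d%:R^-1) in
  exists y : 'rV[R]_d,
    m <= l2norm y <= M /\
    forall s : sentence n V, eps <= l2norm (f (embed_sentence u s) - y).
Proof.
move=> M m eps.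
pose F (s : sentence n V) := l2norm (f (embed_sentence u s)).
have M0 : 0 <= M.
  rewrite /M /Mmax; elim/big_ind: _ => //.
    by move=> x y hx hy; rewrite le_max hx.
  by move=> s _; exact: nrm_ge0.
have FM s : F s <= M.
  by rewrite /M /Mmax (bigD1 s) //= le_max lexx.
have mF s : m <= F s.
  by rewrite /m /mmin (bigD1 s) //= ge_min lexx.
have m0 : 0 <= m.
  rewrite /m /mmin; elim/big_ind: _ => //.
    by move=> x y hx hy; rewrite le_min hx hy.
  by move=> s _; exact: nrm_ge0.
pose s0 : sentence n V := [ffun => Ordinal hV].
have mM : m <= M := le_trans (mF s0) (FM s0).
have Vn : (0 < V ^ n)%N by rewrite expn_gt0 hV.
have Vp : 0 < (V ^ n)%:R :> R by rewrite ltr0n.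
have Z0 : 0 <= (M ^+ d - m ^+ d) / (V ^ n)%:R.
  by rewrite divr_ge0 ?ler0n // subr_ge0 lerXn2r // ?nnegrE.
have epsd : eps ^+ d = (M ^+ d - m ^+ d) / (V ^ n)%:R.
  rewrite /eps -powR_mulrn ?powR_ge0 // -powRrM mulVf ?powRr1 //.
  by rewrite pnatr_eq0 -lt0n.
have eps0 : 0 <= eps by exact: powR_ge0.
case: (eqVneq eps 0) => [e0|en0].
  exists (f (embed_sentence u s0)); split; first by rewrite mF FM.
  by move=> s; rewrite e0 nrm_ge0.
have epsp : 0 < eps by rewrite lt_neqAle eq_sym en0 eps0.
pose P := [seq f (embed_sentence u s) | s <- enum (sentence n V)].
have sP : size P = (V ^ n)%N.
  by rewrite size_map -cardE card_ffun !card_ord.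
have P0 : (0 < size P)%N by rewrite sP.
have Pe : (size P)%:R * eps ^+ d = M ^+ d - m ^+ d.
  by rewrite sP epsd mulrC -mulrA mulVf ?gt_eqF // mulr1.
have [y [hy hP]] := @core R d hd P m M eps m0 mM epsp P0 Pe.
exists y; split => // s; apply: hP; apply: map_f; by rewrite mem_enum.
Qed.
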